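(* For every integer $l\ge 3$ there exists a (non-monotone) search $\tilde c$-strategy that cleans the tree $T_l$ using $3$ searchers, one of each color $1,2,3$.
   Context: An edge-labeled graph $G=(V(G),E(G),c)$ is a simple graph with $c\colon E(G)\to\{1,\dots,k\}$; $c(v)$ denotes the set of colors of edges incident to $v$. Edge search: a search strategy is a sequence of moves: placing a searcher on a vertex, removing a searcher from a vertex, or sliding a searcher from $u$ along an edge $\{u,v\}$ to $v$. Initially all edges are contaminated; a slide along an edge makes it clean; after every move, a clean edge $e$ becomes contaminated if some path with no searcher-occupied vertex joins an endpoint of $e$ to an endpoint of a contaminated edge. The strategy must end with all edges clean; it uses $k$ searchers if at most $k$ are simultaneously present. In a search $\tilde c$-strategy each searcher $j$ has a fixed color $\tilde c(j)$, may be placed on $v$ only if $\tilde c(j)\in c(v)$, and may slide along $e$ only if $\tilde c(j)=c(e)$. The tree $T_l$ ($l\ge 3$), with colors $\{1,2,3\}$: For $i\in\{1,2\}$, $T'_i$ has root $q_i$ with three children joined to $q_i$ by edges of color 1, and each of these children has three children joined by edges of color 2. $T''_l$: a path $v_0,v_1,\dots,v_{l+1}$ with edges $e_x=\{v_x,v_{x+1}\}$ of color $(x \bmod 3)+1$ for $x\in\{0,\dots,l\}$; additionally, for each $x\in\{1,\dots,l\}$, attach to $v_x$ one pendant edge of color $(x\bmod 3)+1$ and one pendant edge of color $((x-1)\bmod 3)+1$. Let $P$ be a path $p_0p_1p_2p_3p_4$ with edges $\{p_0,p_1\},\{p_3,p_4\}$ of color 3 and $\{p_1,p_2\},\{p_2,p_3\}$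 of color 2. $T_l$ is obtained from disjoint copies of $T'_1,T'_2,T''_l,P$ by identifying $p_2$ with $v_0$, $p_0$ with $q_1$, and $p_4$ with $q_2$. *)

(* Defs.v *)
From HB Require Import structures.
From mathcomp Require Import all_boot.
Set Implicit Arguments. Unset Strict Implicit. Unset Printing Implicit Defensive.

(* Edge-labelled simple graphs, given by a list of edges (u, v, colour).    *)
Definition edge (V : Type) := (V * V * nat)%type.

Section Search.
Variables (V : eqType) (G : seq (edge V)).

Definition endpt (e : edge V) (v : V) : Prop := e.1.1 = v \/ e.1.2 = v.

Definition col_at (v : V) (c : nat) : Prop :=
  exists2 e, e \in G & endpt e v /\ e.2 = c.

Definition adj (u v : V) : Prop :=
  exists2 e, e \in G & (e.1.1 = u /\ e.1.2 = v) \/ (e.1.1 = v /\ e.1.2 = u).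

Variable k : nat.
Variable ctil : 'I_k -> nat.

(* a state: position of each searcher (None = not on the graph) and the
   set of clean edges *)
Record state := State { pos : 'I_k -> option V ; clean : edge V -> Prop }.

Definition occupied (p : 'I_k -> option V) (v : V) : Prop :=
  exists j, p j = Some v.

Inductive free_conn (p : 'I_k -> option V) : V -> V -> Prop :=
| fc_refl x : ~ occupied p x -> free_conn p x x
| fc_step x y z : ~ occupied p x -> adj x y -> free_conn p y z -> free_conn p x z.

Definition recontaminate (p : 'I_k -> option V) (cl : edge V -> Prop)
  : edge V -> Prop :=
  fun e => cl e /\
    ~ (exists f x y, [/\ f \in G, ~ cl f, endpt e x, endpt f y & free_conn p x y]).

Definition upd (p : 'I_k -> option V) (j : 'I_k) (o : option V) :=
  fun i => if i == j then o else p i.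

Inductive move : state -> state -> Prop :=
| mv_place (s : state) (j : 'I_k) (v : V) :
    pos s j = None -> col_at v (ctil j) ->
    move s (State (upd (pos s) j (Some v))
                  (recontaminate (upd (pos s) j (Some v)) (clean s)))
| mv_remove (s : state) (j : 'I_k) (v : V) :
    pos s j = Some v ->
    move s (State (upd (pos s) j None)
                  (recontaminate (upd (pos s) j None) (clean s)))
| mv_slide (s : state) (j : 'I_k) (e : edge V) (u v : V) :
    e \in G -> e.2 = ctil j ->
    (e.1.1 = u /\ e.1.2 = v \/ e.1.1 = v /\ e.1.2 = u) ->
    pos s j = Some u ->
    move s (State (upd (pos s) j (Some v))
                  (recontaminate (upd (pos s) j (Some v))
                                 (fun f => clean s f \/ f = e))).

Definition search_strategy_exists : Prop :=
  exists (n : nat) (st : nat -> state),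
    [/\ (forall j, pos (st 0) j = None),
        (forall e, ~ clean (st 0) e),
        (forall i, i < n -> move (st i) (st i.+1)) &
        (forall e, e \in G -> clean (st n) e)].

End Search.

Inductive vtx :=
| Troot of nat            (* q_i, i in {1,2}  (= p_0, p_4)                 *)
| Tmid of nat & nat       (* Tmid i a : child a (a<3) of q_i                *)
| Tleaf of nat & nat & nat(* Tleaf i a b : child b (b<3) of Tmid i a        *)
| Pv of nat               (* p_1, p_3 of the path P                         *)
| Vv of nat               (* v_x, x = 0..l+1 (v_0 = p_2)                    *)
| Pend of nat & nat.      (* Pend x t : the two pendant leaves at v_x        *)

Definition vtx_eq_dec (x y : vtx) : {x = y} + {x <> y}.
Proof. decide equality; exact: (fun m n : nat => decP (@eqP _ m n)). Defined.

Definition vtx_eqb (x y : vtx) : bool := if vtx_eq_dec x y then true else false.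

Lemma vtx_eqP : Equality.axiom vtx_eqb.
Proof. by move=> x y; rewrite /vtx_eqb; case: vtx_eq_dec => h; constructor. Qed.

HB.instance Definition _ := hasDecEq.Build vtx vtx_eqP.

Definition T_edges (l : nat) : seq (edge vtx) :=
  (* the path P with p_0 = q_1, p_2 = v_0, p_4 = q_2 *)
  [:: (Troot 1, Pv 1, 3); (Pv 1, Vv 0, 2); (Vv 0, Pv 3, 2); (Pv 3, Troot 2, 3)]
  ++ flatten [seq (Troot i, Tmid i a, 1) ::
                  [seq (Tmid i a, Tleaf i a b, 2) | b <- iota 0 3]
             | i <- [:: 1; 2], a <- iota 0 3]
  ++ [seq (Vv x, Vv x.+1, (x %% 3).+1) | x <- iota 0 l.+1]
  ++ flatten [seq [:: (Vv x, Pend x 0, (x %% 3).+1);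
                      (Vv x, Pend x 1, ((x - 1) %% 3).+1)]
             | x <- iota 1 l].

(* Main.v *)
Require Import Defs.
From mathcomp Require Import all_boot zify.
Set Implicit Arguments. Unset Strict Implicit. Unset Printing Implicit Defensive.

Section Generic.
Variables (V : eqType) (G : seq (edge V)) (k : nat).

Definition sealed (p : 'I_k -> option V) (S : edge V -> bool) : Prop :=
  forall w, ~ occupied p w -> (exists e, [/\ e \in G, S e & endpt e w]) ->
    forall g, g \in G -> endpt g w -> S g.

Lemma fc_sealed p (S : edge V -> bool) x y : sealed p S -> free_conn G p x y ->
  (exists e, [/\ e \in G, S e & endpt e x]) -> forall g, g \in G -> endpt g y -> S g.
Proof.
move=> Hs; elim=> {x y} [x Hx|x y z Hx Hadj _ IH] Hex.
  exact: Hs.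
apply: IH; case: Hadj => e eG Ho; exists e; split => //.
  by apply: (Hs x Hx Hex e eG); rewrite /endpt; case: Ho => [[-> _]|[_ ->]]; auto.
by rewrite /endpt; case: Ho => [[_ ->]|[-> _]]; auto.
Qed.

Lemma keep p (cl : edge V -> Prop) (S : edge V -> bool) : (forall e, e \in G -> S e -> cl e) ->
  sealed p S -> forall e, e \in G -> S e -> recontaminate G p cl e.
Proof.
move=> Hcl Hs e eG Se; split; first exact: Hcl.
case=> f [x [y [fG nf ex fy fc]]]; apply: nf; apply: Hcl => //.
by apply: (fc_sealed Hs fc) => //; exists e.
Qed.

End Generic.
Inductive TE (l : nat) : edge vtx -> Prop :=
| TE_q1p1 : TE l (Troot 1, Pv 1, 3)
| TE_p1v0 : TE l (Pv 1, Vv 0, 2)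
| TE_v0p3 : TE l (Vv 0, Pv 3, 2)
| TE_p3q2 : TE l (Pv 3, Troot 2, 3)
| TE_root i a : (i == 1) || (i == 2) -> a < 3 -> TE l (Troot i, Tmid i a, 1)
| TE_leaf i a b : (i == 1) || (i == 2) -> a < 3 -> b < 3 -> TE l (Tmid i a, Tleaf i a b, 2)
| TE_sp y : y <= l -> TE l (Vv y, Vv y.+1, (y %% 3).+1)
| TE_p0 y : 0 < y <= l -> TE l (Vv y, Pend y 0, (y %% 3).+1)
| TE_p1 y : 0 < y <= l -> TE l (Vv y, Pend y 1, ((y - 1) %% 3).+1).

Lemma TEP l g : g \in T_edges l -> TE l g.
Proof.
rewrite /T_edges !mem_cat => /orP[H|/orP[H|/orP[H|H]]].
- move: H; rewrite !inE.
  by repeat (case/orP => [/eqP->|]; first by constructor); move/eqP->; constructor.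
- move: H; rewrite /= !inE => H.
  by repeat (case/orP: H => H); try (move/eqP: H => ->; by constructor).
- case/mapP: H => y; rewrite mem_iota => /andP[_ Hy] ->; constructor; lia.
- case/flatten_mapP: H => y; rewrite mem_iota => /andP[H1 H2].
  by rewrite !inE => /orP[/eqP->|/eqP->]; constructor; lia.
Qed.

Section Mem.
Variable l : nat.
Lemma mem_q1p1 : (Troot 1, Pv 1, 3) \in T_edges l. Proof. by rewrite mem_cat inE eqxx. Qed.
Lemma mem_p1v0 : (Pv 1, Vv 0, 2) \in T_edges l. Proof. by rewrite mem_cat !inE eqxx orbT. Qed.
Lemma mem_v0p3 : (Vv 0, Pv 3, 2) \in T_edges l. Proof. by rewrite mem_cat !inE eqxx !orbT. Qed.
Lemma mem_p3q2 : (Pv 3, Troot 2, 3) \in T_edges l. Proof. by rewrite mem_cat !inE eqxx !orbT. Qed.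
Lemma mem_tree g : g \in flatten [seq (Troot i, Tmid i a, 1) ::
                  [seq (Tmid i a, Tleaf i a b, 2) | b <- iota 0 3]
             | i <- [:: 1; 2], a <- iota 0 3] -> g \in T_edges l.
Proof. move=> H; rewrite /T_edges mem_cat; apply/orP; right; by rewrite mem_cat H. Qed.
Lemma mem_root i a : (i == 1) || (i == 2) -> a < 3 -> (Troot i, Tmid i a, 1) \in T_edges l.
Proof.
move=> Hi Ha; apply: mem_tree.
by case/orP: Hi => /eqP->; case: a Ha => [|[|[|]]].
Qed.
Lemma mem_leaf i a b : (i == 1) || (i == 2) -> a < 3 -> b < 3 -> (Tmid i a, Tleaf i a b, 2) \in T_edges l.
Proof.
move=> Hi Ha Hb; apply: mem_tree.
by case/orP: Hi => /eqP->; case: a Ha => [|[|[|]]] //; case: b Hb => [|[|[|]]].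
Qed.
Lemma mem_sp y : y <= l -> (Vv y, Vv y.+1, (y %% 3).+1) \in T_edges l.
Proof.
move=> Hy; rewrite /T_edges !mem_cat; apply/orP; right; apply/orP; right; apply/orP; left.
by apply/mapP; exists y => //; rewrite mem_iota; lia.
Qed.
Lemma mem_pend y t : 0 < y <= l -> t < 2 ->
  (Vv y, Pend y t, ((if t is 0 then y else y - 1) %% 3).+1) \in T_edges l.
Proof.
move=> Hy Ht; rewrite /T_edges !mem_cat; apply/orP; right; apply/orP; right; apply/orP; right.
apply/flatten_mapP; exists y; first by rewrite mem_iota; lia.
by case: t Ht => [|[|]] //= _; rewrite !inE eqxx ?orbT.
Qed.
Lemma mem_p0 y : 0 < y <= l -> (Vv y, Pend y 0, (y %% 3).+1) \in T_edges l.
Proof. by move=> H; apply: (@mem_pend y 0 H). Qed.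
Lemma mem_p1 y : 0 < y <= l -> (Vv y, Pend y 1, ((y - 1) %% 3).+1) \in T_edges l.
Proof. by move=> H; apply: (@mem_pend y 1 H). Qed.
End Mem.

Record desc := D { t1 : nat; t2 : nat; fa : bool; fb : bool; fc : bool; fd : bool;
                   xx : nat; f0 : bool; f1 : bool }.

Definition tsel (d : desc) (i n : nat) : bool :=
  if i == 1 then n < t1 d else if i == 2 then n < t2 d else false.

Definition Sd (d : desc) (e : edge vtx) : bool :=
  match e with
  | (Troot i, Tmid _ a, _) => tsel d i (4 * a + 3)
  | (Tmid i a, Tleaf _ _ b, _) => tsel d i (4 * a + b)
  | (Troot _, Pv _, _) => fa d
  | (Pv _, Vv _, _) => fb d
  | (Vv _, Pv _, _) => fc d
  | (Pv _, Troot _, _) => fd d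
  | (Vv a, Vv _, _) => xx d <= a
  | (Vv a, Pend _ t, _) => (xx d < a) || ((a == xx d) && (if t is 0 then f0 d else f1 d))
  | _ => false
  end.

Definition inc (l : nat) (w : vtx) : seq (edge vtx) :=
  match w with
  | Troot i => if i == 1 then [:: (Troot 1, Pv 1, 3); (Troot 1, Tmid 1 0, 1);
                                  (Troot 1, Tmid 1 1, 1); (Troot 1, Tmid 1 2, 1)]
               else if i == 2 then [:: (Pv 3, Troot 2, 3); (Troot 2, Tmid 2 0, 1);
                                  (Troot 2, Tmid 2 1, 1); (Troot 2, Tmid 2 2, 1)]
               else [::]
  | Tmid i a => if ((i == 1) || (i == 2)) && (a < 3) then
                  [:: (Troot i, Tmid i a, 1); (Tmid i a, Tleaf i a 0, 2);
                      (Tmid i a, Tleaf i a 1, 2); (Tmid i a, Tleaf i a 2, 2)]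
                else [::]
  | Tleaf i a b => [:: (Tmid i a, Tleaf i a b, 2)]
  | Pv i => if i == 1 then [:: (Troot 1, Pv 1, 3); (Pv 1, Vv 0, 2)]
            else if i == 3 then [:: (Vv 0, Pv 3, 2); (Pv 3, Troot 2, 3)] else [::]
  | Vv y => match y with
            | 0 => [:: (Pv 1, Vv 0, 2); (Vv 0, Pv 3, 2); (Vv 0, Vv 1, 1)]
            | y'.+1 => if y' < l then
                 [:: (Vv y', Vv y'.+1, (y' %% 3).+1); (Vv y'.+1, Vv y'.+2, (y'.+1 %% 3).+1);
                     (Vv y'.+1, Pend y'.+1 0, (y'.+1 %% 3).+1);
                     (Vv y'.+1, Pend y'.+1 1, ((y'.+1 - 1) %% 3).+1)]
               else if y' == l then [:: (Vv l, Vv l.+1, (l %% 3).+1)] else [::]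
            end
  | Pend y t => [:: (Vv y, Pend y t, ((if t is 0 then y else y - 1) %% 3).+1)]
  end.

Lemma inc_spec l g w : g \in T_edges l -> endpt g w -> g \in inc l w.
Proof.
move/TEP; case=> [||||i a Hi Ha|i a b Hi Ha Hb|y Hy|y Hy|y Hy];
  rewrite /endpt /= => -[]<- //=.
- by case/orP: Hi => /eqP->; case: a Ha => [|[|[|]]].
- by rewrite Hi Ha /= inE eqxx.
- by rewrite Hi Ha /=; case: b Hb => [|[|[|]]] // _; rewrite !inE eqxx ?orbT.
- exact: mem_head.
- case: y Hy => [|y] Hy //=; by rewrite ifT ?inE ?eqxx ?orbT //; lia.
- case: ltnP => H; first by rewrite inE eqxx.
  by rewrite (_ : y = l) ?ltnn ?eqxx ?inE ?eqxx //; lia.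
- case: y Hy => [|y] Hy //=; by rewrite ifT ?inE ?eqxx ?orbT //; lia.
- exact: mem_head.
- case: y Hy => [|y] Hy //=; by rewrite ifT ?inE ?eqxx ?orbT //; lia.
- exact: mem_head.
Qed.

Definition tri := (option vtx * option vtx * option vtx)%type.
Definition occ3 (T : tri) (w : vtx) : Prop :=
  T.1.1 = Some w \/ T.1.2 = Some w \/ T.2 = Some w.
Definition pos3 (T : tri) (j : 'I_3) : option vtx :=
  match nat_of_ord j with 0 => T.1.1 | 1 => T.1.2 | _ => T.2 end.

Definition seal_conds (l : nat) (T : tri) (d : desc) : Prop :=
 (forall a, a < 3 -> occ3 T (Tmid 1 a) \/ t1 d <= 4*a \/ 4*a+4 <= t1 d) /\
 (occ3 T (Troot 1) \/ (fa d = (3 < t1 d) /\ fa d = (7 < t1 d) /\ fa d = (11 < t1 d))) /\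
 (occ3 T (Pv 1) \/ fa d = fb d) /\
 (occ3 T (Vv 0) \/ (fb d = fc d /\ fc d = (xx d == 0))) /\
 (occ3 T (Pv 3) \/ fc d = fd d) /\
 (occ3 T (Troot 2) \/ (fd d = (3 < t2 d) /\ fd d = (7 < t2 d) /\ fd d = (11 < t2 d))) /\
 (forall a, a < 3 -> occ3 T (Tmid 2 a) \/ t2 d <= 4*a \/ 4*a+4 <= t2 d) /\
 (0 < xx d <= l -> occ3 T (Vv (xx d))).

Lemma seal_ok l T d : seal_conds l T d -> forall w, ~ occ3 T w ->
  has (Sd d) (inc l w) -> all (Sd d) (inc l w).
Proof.
case=> [C1 [C2 [C3 [C4 [C5 [C6 [C7 C8]]]]]]] w nw.
case: w nw => [i|i a|i a b|i|y|y t] nw /=.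
- case: i nw => [|[|[|i]]] nw //=.
  + case: C2 => [//|[E1 [E2 E3]]]; rewrite /tsel /=.
    by rewrite -E1 -E2 -E3; case: (fa d).
  + case: C6 => [//|[E1 [E2 E3]]]; rewrite /tsel /=.
    by rewrite -E1 -E2 -E3; case: (fd d).
- case: i nw => [|[|[|i]]] nw //=; case: (ltnP a 3) => Ha //=.
  + case: (C1 a Ha) => [//|H]; rewrite /tsel /=; lia.
  + case: (C7 a Ha) => [//|H]; rewrite /tsel /=; lia.
- by rewrite orbF andbT.
- case: i nw => [|[|[|[|i]]]] nw //=.
  + by case: C3 => [//|->]; case: (fb d).
  + by case: C5 => [//|->]; case: (fd d).
- case: y nw => [|y] nw /=.
  + by case: C4 => [//|[-> ->]]; case: (xx d) => [|n].
  + case: ltnP => Hy /=.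
      have Hne : (y.+1 == xx d) = false.
        by apply/negbTE/eqP => E; apply: nw; rewrite E; apply: C8; lia.
      rewrite Hne /=; lia.
    by case: eqP => //= _; rewrite orbF andbT.
- by rewrite orbF andbT.
Qed.

Lemma sealed_of l (p : 'I_3 -> option vtx) T d : (forall j, p j = pos3 T j) ->
  seal_conds l T d -> sealed (T_edges l) p (Sd d).
Proof.
move=> Hp Hc w nw [e [eG Se ew]] g gG gw.
have nw3 : ~ occ3 T w.
  case=> [H|[H|H]]; apply: nw.
  - by exists ord0; rewrite Hp.
  - by exists (@Ordinal 3 1 isT); rewrite Hp.
  - by exists (@Ordinal 3 2 isT); rewrite Hp.
have /allP := seal_ok Hc nw3 (introT hasP (ex_intro2 _ _ e (inc_spec eG ew) Se)).
by apply; apply: inc_spec.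
Qed.

Definition ct (j : 'I_3) : nat := (nat_of_ord j).+1.

Inductive act :=
| Pl of 'I_3 & vtx & edge vtx
| Rm of 'I_3 & (desc -> desc)
| Sl of 'I_3 & edge vtx & vtx & vtx & (desc -> desc).

Definition upd3 (T : tri) (j : 'I_3) (o : option vtx) : tri :=
  match nat_of_ord j with
  | 0 => (o, T.1.2, T.2) | 1 => (T.1.1, o, T.2) | _ => (T.1.1, T.1.2, o) end.

Lemma pos3_upd T j o i : pos3 (upd3 T j o) i = upd (pos3 T) j o i.
Proof.
by case: i => [[|[|[|i]]] Hi] //; case: j => [[|[|[|j]]] Hj].
Qed.

Section Run.
Variable l : nat.
Local Notation G := (T_edges l).
Local Notation stt := (state vtx 3).

Definition stepA (s : stt) (a : act) : stt :=
  match a with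
  | Pl j v _ => State (upd (pos s) j (Some v))
                      (recontaminate G (upd (pos s) j (Some v)) (clean s))
  | Rm j _ => State (upd (pos s) j None)
                      (recontaminate G (upd (pos s) j None) (clean s))
  | Sl j e u v _ => State (upd (pos s) j (Some v))
                      (recontaminate G (upd (pos s) j (Some v))
                                 (fun f => clean s f \/ f = e))
  end.

Fixpoint valid (s : stt) (acts : seq act) : Prop :=
  match acts with
  | [::] => True
  | a :: r => move G ct s (stepA s a) /\ valid (stepA s a) r
  end.

Definition runs (s : stt) (acts : seq act) : stt := foldl stepA s acts.

Definition Inv (T : tri) (d : desc) (s : stt) : Prop :=
  (forall j, pos s j = pos3 T j) /\ (forall g, g \in G -> Sd d g -> clean s g).

Definition Hoare (T : tri) (d : desc) (acts : seq act) (T' : tri) (d' : desc) : Prop :=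
  forall s, Inv T d s -> valid s acts /\ Inv T' d' (runs s acts).

Lemma H_nil T d T' d' : T = T' -> d = d' -> Hoare T d [::] T' d'.
Proof. by move=> -> -> s H. Qed.



Lemma valid_cat s a b : valid s (a ++ b) <-> valid s a /\ valid (runs s a) b.
Proof.
elim: a s => [|x r IH] s /=; first by intuition.
rewrite IH; intuition.
Qed.

Lemma H_cat T d a T1 d1 b T' d' : Hoare T d a T1 d1 -> Hoare T1 d1 b T' d' ->
  Hoare T d (a ++ b) T' d'.
Proof.
move=> Ha Hb s Hs; have [Va Ia] := Ha s Hs; have [Vb Ib] := Hb _ Ia.
by rewrite valid_cat /runs foldl_cat.
Qed.

Lemma Inv_step T d T' d' s j o (cl : edge vtx -> Prop) :
  Inv T d s -> T' = upd3 T j o ->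
  (forall g, g \in G -> Sd d' g -> cl g) -> seal_conds l T' d' ->
  Inv T' d' (State (upd (pos s) j o) (recontaminate G (upd (pos s) j o) cl)).
Proof.
move=> [Hp Hc] -> Hcl Hs.
have Hp' : forall i, upd (pos s) j o i = pos3 (upd3 T j o) i.
  by move=> i; rewrite pos3_upd /upd; case: (i == j).
split=> //= g gG Sg; exact: (keep Hcl (sealed_of Hp' Hs)).
Qed.

Lemma H_place T d j v w rest T' d' :
  pos3 T j = None -> w \in G -> endpt w v -> w.2 = ct j ->
  seal_conds l (upd3 T j (Some v)) d ->
  Hoare (upd3 T j (Some v)) d rest T' d' -> Hoare T d (Pl j v w :: rest) T' d'.
Proof.
move=> Hj wG wv wc Hs H s Is.
have I' : Inv (upd3 T j (Some v)) d (stepA s (Pl j v w)).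
  by apply: (Inv_step Is erefl _ Hs); case: Is.
have [V1 I1] := H _ I'; split=> //; split=> //.
by apply: mv_place; [rewrite (proj1 Is) Hj|exists w].
Qed.

Lemma H_rm T d j u f rest T' d' :
  pos3 T j = Some u -> (forall g, g \in G -> Sd (f d) g -> Sd d g) ->
  seal_conds l (upd3 T j None) (f d) ->
  Hoare (upd3 T j None) (f d) rest T' d' -> Hoare T d (Rm j f :: rest) T' d'.
Proof.
move=> Hj Hf Hs H s Is.
have I' : Inv (upd3 T j None) (f d) (stepA s (Rm j f)).
  apply: (Inv_step Is erefl _ Hs) => g gG Sg; case: Is => _; apply=> //; exact: Hf.
have [V1 I1] := H _ I'; split=> //; split=> //.
by apply: mv_remove; rewrite (proj1 Is) Hj.
Qed.

Lemma H_sl T d j e u v f rest T' d' :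
  e \in G -> e.2 = ct j -> (e.1.1 = u /\ e.1.2 = v \/ e.1.1 = v /\ e.1.2 = u) ->
  pos3 T j = Some u -> (forall g, g \in G -> Sd (f d) g -> Sd d g \/ g = e) ->
  seal_conds l (upd3 T j (Some v)) (f d) ->
  Hoare (upd3 T j (Some v)) (f d) rest T' d' -> Hoare T d (Sl j e u v f :: rest) T' d'.
Proof.
move=> eG ec eo Hj Hf Hs H s Is.
have I' : Inv (upd3 T j (Some v)) (f d) (stepA s (Sl j e u v f)).
  apply: (Inv_step Is erefl _ Hs) => g gG Sg.
  by case: (Hf g gG Sg) => [S0|->]; [left; case: Is => _; apply|right].
have [V1 I1] := H _ I'; split=> //; split=> //.
by apply: (mv_slide (u:=u)) => //; rewrite (proj1 Is) Hj.
Qed.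

Lemma valid_take s acts i : valid s acts -> i < size acts ->
  move G ct (runs s (take i acts)) (runs s (take i.+1 acts)).
Proof.
elim: acts s i => [|a r IH] s [|i] //= [Hm Hv] Hi.
  by rewrite take0.
exact: IH.
Qed.

End Run.

Definition inc_t (i : nat) (d : desc) : desc :=
  D (t1 d + (i == 1)) (t2 d + (i == 2)) (fa d) (fb d) (fc d) (fd d) (xx d) (f0 d) (f1 d).
Definition set_fa d := D (t1 d) (t2 d) true (fb d) (fc d) (fd d) (xx d) (f0 d) (f1 d).
Definition reset_fa d := D (t1 d) (t2 d) false (fb d) (fc d) (fd d) (xx d) (f0 d) (f1 d).
Definition set_fb d := D (t1 d) (t2 d) (fa d) true (fc d) (fd d) (xx d) (f0 d) (f1 d).
Definition set_fc d := D (t1 d) (t2 d) (fa d) (fb d) true (fd d) (xx d) (f0 d) (f1 d).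
Definition set_fd d := D (t1 d) (t2 d) (fa d) (fb d) (fc d) true (xx d) (f0 d) (f1 d).
Definition set_f0 d := D (t1 d) (t2 d) (fa d) (fb d) (fc d) (fd d) (xx d) true (f1 d).
Definition set_f1 d := D (t1 d) (t2 d) (fa d) (fb d) (fc d) (fd d) (xx d) (f0 d) true.
Definition dec_x d := D (t1 d) (t2 d) (fa d) (fb d) (fc d) (fd d) (xx d).-1 false false.

Definition tidx (e : edge vtx) : option (nat * nat) :=
  match e with
  | (Troot i, Tmid _ a, _) => Some (i, 4 * a + 3)
  | (Tmid i a, Tleaf _ _ b, _) => Some (i, 4 * a + b)
  | _ => None
  end.

Lemma tidx_inj l g e p : g \in T_edges l -> e \in T_edges l ->
  tidx g = Some p -> tidx e = Some p -> g = e.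
Proof.
move=> /TEP Hg /TEP He.
case: Hg => [||||i a Hi Ha|i a b Hi Ha Hb|y Hy|y Hy|y Hy] //=;
case: He => [||||i' a' Hi' Ha'|i' a' b' Hi' Ha' Hb'|y' Hy'|y' Hy'|y' Hy'] //= <- [].
- move=> -> E; have E1 : a = a'. lia. by rewrite E1.
- lia.
- lia.
- move=> -> E; have E1 : a = a'. lia. have E2 : b = b'. lia. by rewrite E1 E2.
Qed.

Lemma dl_tree l i d e g : (i == 1) || (i == 2) -> e \in T_edges l ->
  tidx e = Some (i, if i == 1 then t1 d else t2 d) ->
  g \in T_edges l -> Sd (inc_t i d) g -> Sd d g \/ g = e.
Proof.
move=> Hi eG He gG; move: (gG) => /TEP.
case=> [||||i' a' Hi' Ha'|i' a' b' Hi' Ha' Hb'|y Hy|y Hy|y Hy] /=; try by left.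
- rewrite /tsel /=.
  case/orP: Hi => /eqP Ei; case/orP: Hi' => /eqP Ei'; subst => /=; rewrite ?addn0 ?addn1;
  try by left.
  + rewrite ltnS leq_eqVlt => /orP[/eqP E|H]; [right|by left].
    by apply: (tidx_inj (mem_root _ _ _) eG _ He) => //=; rewrite E.
  + rewrite ltnS leq_eqVlt => /orP[/eqP E|H]; [right|by left].
    by apply: (tidx_inj (mem_root _ _ _) eG _ He) => //=; rewrite E.
- rewrite /tsel /=.
  case/orP: Hi => /eqP Ei; case/orP: Hi' => /eqP Ei'; subst => /=; rewrite ?addn0 ?addn1;
  try by left.
  + rewrite ltnS leq_eqVlt => /orP[/eqP E|H]; [right|by left].
    by apply: (tidx_inj (mem_leaf _ _ _ _) eG _ He) => //=; rewrite E.
  + rewrite ltnS leq_eqVlt => /orP[/eqP E|H]; [right|by left].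
    by apply: (tidx_inj (mem_leaf _ _ _ _) eG _ He) => //=; rewrite E.
Qed.

Lemma dl_fa l d g : g \in T_edges l -> Sd (set_fa d) g -> Sd d g \/ g = (Troot 1, Pv 1, 3).
Proof. by case/TEP => [||||i a _ _|i a b _ _ _|y _|y _|y _] /=; auto. Qed.
Lemma dl_fb l d g : g \in T_edges l -> Sd (set_fb d) g -> Sd d g \/ g = (Pv 1, Vv 0, 2).
Proof. by case/TEP => [||||i a _ _|i a b _ _ _|y _|y _|y _] /=; auto. Qed.
Lemma dl_fc l d g : g \in T_edges l -> Sd (set_fc d) g -> Sd d g \/ g = (Vv 0, Pv 3, 2).
Proof. by case/TEP => [||||i a _ _|i a b _ _ _|y _|y _|y _] /=; auto. Qed.
Lemma dl_fd l d g : g \in T_edges l -> Sd (set_fd d) g -> Sd d g \/ g = (Pv 3, Troot 2, 3).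
Proof. by case/TEP => [||||i a _ _|i a b _ _ _|y _|y _|y _] /=; auto. Qed.
Lemma dl_reset l d g : g \in T_edges l -> Sd (reset_fa d) g -> Sd d g.
Proof. by case/TEP => [||||i a _ _|i a b _ _ _|y _|y _|y _] /=. Qed.
Lemma dl_id l d g : g \in T_edges l -> Sd d g -> Sd d g.
Proof. by []. Qed.

Lemma dl_f0 l d g : g \in T_edges l -> Sd (set_f0 d) g ->
  Sd d g \/ g = (Vv (xx d), Pend (xx d) 0, ((xx d) %% 3).+1).
Proof.
case/TEP => [||||i a _ _|i a b _ _ _|y _|y _|y _] /=; auto.
case/orP=> [H|/andP[/eqP E _]]; first by left; rewrite H.
by right; rewrite E.
Qed.

Lemma dl_f1 l d g : g \in T_edges l -> Sd (set_f1 d) g ->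
  Sd d g \/ g = (Vv (xx d), Pend (xx d) 1, ((xx d - 1) %% 3).+1).
Proof.
case/TEP => [||||i a _ _|i a b _ _ _|y _|y _|y _] /=; auto.
case/orP=> [H|/andP[/eqP E _]]; first by left; rewrite H.
by right; rewrite E.
Qed.

Lemma dl_x l d y g : xx d = y.+1 -> (y.+1 <= l -> f0 d && f1 d) ->
  g \in T_edges l -> Sd (dec_x d) g -> Sd d g \/ g = (Vv y, Vv y.+1, (y %% 3).+1).
Proof.
move=> Ex Hf; case/TEP => [||||i a _ _|i a b _ _ _|z Hz|z Hz|z Hz] /=; auto;
  rewrite Ex /=.
- rewrite leq_eqVlt => /orP[/eqP E|H]; [by right; rewrite E|by left].
- move=> /orP[H|/andP[_ //]]; left; case: (ltngtP y.+1 z) => E //.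
    exfalso; lia.
  have Hl : y.+1 <= l by lia.
  by case/andP: (Hf Hl).
- move=> /orP[H|/andP[_ //]]; left; case: (ltngtP y.+1 z) => E //.
    exfalso; lia.
  have Hl : y.+1 <= l by lia.
  by case/andP: (Hf Hl).
Qed.

Notation j1 := (@Ordinal 3 0 isT).
Notation j2 := (@Ordinal 3 1 isT).
Notation j3 := (@Ordinal 3 2 isT).

Ltac occ := solve [left; reflexivity | right; left; reflexivity | right; right; reflexivity].
Ltac sgoal :=
  match goal with
  | |- forall a : nat, _ => let a := fresh "a" in let H := fresh "H" in
        move=> [|[|[|a]]] H //=; first [left; occ | right; lia]
  | |- _ -> _ => let H := fresh "H" in move=> H; first [occ | exfalso; lia]
  | |- _ \/ (_ /\ _ = (?x == 0)) =>
        first [left; occ | right; split; reflexivity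
              | (is_var x; destruct x; [left; occ | right; split; reflexivity])]
  | |- _ \/ _ => first [left; occ | right; repeat split; reflexivity]
  end.
Ltac sc := rewrite /seal_conds /=; repeat split; sgoal.
Ltac memG := match goal with
  | |- context [(Vv _, Vv _, _) \in T_edges ?l] => apply: (@mem_sp l); lia
  | |- context [(Vv _, Pend _ 0, _) \in T_edges ?l] => apply: (@mem_p0 l); lia
  | |- context [(Vv _, Pend _ 1, _) \in T_edges ?l] => apply: (@mem_p1 l); lia
  | |- context [(Troot _, Tmid _ _, _) \in T_edges ?l] => apply: (@mem_root l); reflexivity
  | |- context [(Tmid _ _, Tleaf _ _ _, _) \in T_edges ?l] => apply: (@mem_leaf l); reflexivity
  | |- context [(Troot _, Pv _, _) \in T_edges ?l] => exact: (@mem_q1p1 l)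
  | |- context [(Pv _, Vv _, _) \in T_edges ?l] => exact: (@mem_p1v0 l)
  | |- context [(Vv _, Pv _, _) \in T_edges ?l] => exact: (@mem_v0p3 l)
  | |- context [(Pv _, Troot _, _) \in T_edges ?l] => exact: (@mem_p3q2 l)
  end.
Ltac colr := rewrite /ct /=; first [reflexivity | lia].
Ltac delta := let g := fresh "g" in let gG := fresh "gG" in move=> g gG;
  lazymatch goal with
  | |- is_true (Sd ?d _) -> is_true (Sd ?d _) => exact: (dl_id gG)
  | |- is_true (Sd (reset_fa _) _) -> _ => exact: (dl_reset gG)
  | |- is_true (Sd (inc_t _ _) _) -> _ => apply: (dl_tree _ _ _ gG); [reflexivity | memG | reflexivity]
  | |- is_true (Sd (set_fa _) _) -> _ => exact: (dl_fa gG)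
  | |- is_true (Sd (set_fb _) _) -> _ => exact: (dl_fb gG)
  | |- is_true (Sd (set_fc _) _) -> _ => exact: (dl_fc gG)
  | |- is_true (Sd (set_fd _) _) -> _ => exact: (dl_fd gG)
  | |- is_true (Sd (set_f0 _) _) -> _ => exact: (dl_f0 gG)
  | |- is_true (Sd (set_f1 _) _) -> _ => exact: (dl_f1 gG)
  | |- is_true (Sd (dec_x _) _) -> _ =>
      apply: (dl_x _ _ gG); [reflexivity | first [move=> _; reflexivity | move=> ?; exfalso; lia]]
  end.
Ltac orient := first [by left | by right].
Ltac hstep :=
  lazymatch goal with
  | |- Hoare _ _ _ [::] _ _ => apply: H_nil; reflexivity
  | |- Hoare _ _ _ (Pl _ _ _ :: _) _ _ =>
      eapply H_place; [reflexivity | memG | orient | colr | sc | ]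
  | |- Hoare _ _ _ (Rm _ _ :: _) _ _ => eapply H_rm; [reflexivity | delta | sc | ]
  | |- Hoare _ _ _ (Sl _ _ _ _ _ :: _) _ _ =>
      eapply H_sl; [memG | colr | orient | reflexivity | delta | sc | ]
  end.

Definition leafA i a b : seq act :=
  [:: Pl j2 (Tleaf i a b) (Tmid i a, Tleaf i a b, 2);
      Sl j2 (Tmid i a, Tleaf i a b, 2) (Tleaf i a b) (Tmid i a) (inc_t i); Rm j2 id].
Definition subA i a : seq act :=
  Pl j1 (Tmid i a) (Troot i, Tmid i a, 1) :: leafA i a 0 ++ leafA i a 1 ++ leafA i a 2 ++
  [:: Sl j1 (Troot i, Tmid i a, 1) (Tmid i a) (Troot i) (inc_t i); Rm j1 id].
Definition tree i := subA i 0 ++ subA i 1 ++ subA i 2.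

Definition d0 l := D 0 0 false false false false l.+1 false false.

Lemma phase1 l : Hoare l (None, None, None) (d0 l)
  (Pl j3 (Troot 1) (Troot 1, Pv 1, 3) :: tree 1)
  (None, None, Some (Troot 1)) (D 12 0 false false false false l.+1 false false).
Proof.
rewrite /tree /subA /leafA /=.
do 40 hstep.
Qed.

Definition sr (y : nat) : 'I_3 := Ordinal (@ltn_pmod y 3 isT).
Lemma sr0 y : y %% 3 = 0 -> sr y = j1. Proof. by move=> H; apply: val_inj. Qed.
Lemma sr1 y : y %% 3 = 1 -> sr y = j2. Proof. by move=> H; apply: val_inj. Qed.
Lemma sr2 y : y %% 3 = 2 -> sr y = j3. Proof. by move=> H; apply: val_inj. Qed.

Definition gpos z := if z %% 3 == 1 then Pv 1 else Troot 1.
Definition fa_of z := z %% 3 == 1.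

Definition TS y : tri :=
  upd3 (upd3 (None, None, None) (sr y.+1) (Some (Vv y.+1))) (sr y.+2) (Some (gpos y.+2)).
Definition dS y := D 12 0 (fa_of y.+2) false false false y.+1 false false.
Definition TEy y : tri :=
  upd3 (upd3 (None, None, None) (sr y) (Some (Vv y))) (sr y.+2) (Some (gpos y.+2)).
Definition dE y := D 12 0 (fa_of y.+2) false false false y false false.

Definition stepS y : seq act :=
  [:: Pl (sr y) (Pend y.+1 1) (Vv y.+1, Pend y.+1 1, ((y.+1 - 1) %% 3).+1);
      Sl (sr y) (Vv y.+1, Pend y.+1 1, ((y.+1 - 1) %% 3).+1) (Pend y.+1 1) (Vv y.+1) set_f1;
      Sl (sr y.+1) (Vv y.+1, Pend y.+1 0, (y.+1 %% 3).+1) (Vv y.+1) (Pend y.+1 0) set_f0;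
      Rm (sr y.+1) id;
      Pl (sr y.+1) (Vv y.+1) (Vv y.+1, Pend y.+1 0, (y.+1 %% 3).+1);
      Sl (sr y) (Vv y, Vv y.+1, (y %% 3).+1) (Vv y.+1) (Vv y) dec_x;
      Rm (sr y.+1) id].

Lemma res3 y : [\/ [/\ y %% 3 = 0, y.+1 %% 3 = 1, y.+2 %% 3 = 2 & y.+3 %% 3 = 0],
                   [/\ y %% 3 = 1, y.+1 %% 3 = 2, y.+2 %% 3 = 0 & y.+3 %% 3 = 1] |
                   [/\ y %% 3 = 2, y.+1 %% 3 = 0, y.+2 %% 3 = 1 & y.+3 %% 3 = 2]].
Proof.
have : y %% 3 < 3 by apply: ltn_pmod.
case E: (y %% 3) => [|[|[|]]] // _; [apply: Or31|apply: Or32|apply: Or33]; split=> //; lia.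
Qed.

Ltac resid y :=
  let H0 := fresh "H0" in let H1 := fresh "H1" in let H2 := fresh "H2" in let H3 := fresh "H3" in
  case: (res3 y) => [[H0 H1 H2 H3]|[H0 H1 H2 H3]|[H0 H1 H2 H3]];
  rewrite ?(sr0 H0) ?(sr1 H0) ?(sr2 H0) ?(sr0 H1) ?(sr1 H1) ?(sr2 H1)
          ?(sr0 H2) ?(sr1 H2) ?(sr2 H2) ?(sr0 H3) ?(sr1 H3) ?(sr2 H3)
          /gpos /fa_of ?H2 ?H3 /=.

Lemma step_ok l y : y < l -> Hoare l (TS y) (dS y) (stepS y) (TEy y) (dE y).
Proof.
move=> Hy; rewrite /TS /dS /TEy /dE /stepS.
resid y; do 8 hstep.
Qed.

Definition trans n : seq act :=
  if n.+1 %% 3 == 0 then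
    [:: Pl (sr n.+1) (Troot 1) (Troot 1, Tmid 1 0, 1); Rm (sr n.+2) reset_fa]
  else if n.+1 %% 3 == 1 then
    [:: Sl (sr n.+2) (Troot 1, Pv 1, 3) (Troot 1) (Pv 1) set_fa;
        Pl (sr n.+1) (Pv 1) (Pv 1, Vv 0, 2); Rm (sr n.+2) id]
  else [:: Pl (sr n.+1) (Troot 1) (Troot 1, Pv 1, 3); Rm (sr n.+2) id].

Lemma trans_ok l y : Hoare l (TEy y.+1) (dE y.+1) (trans y.+1) (TS y) (dS y).
Proof.
rewrite /TS /dS /TEy /dE /trans.
have H4 : y.+4 %% 3 = y.+1 %% 3 by lia.
case: (res3 y) => [[H0 H1 H2 H3]|[H0 H1 H2 H3]|[H0 H1 H2 H3]];
  rewrite ?H1 in H4;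
  rewrite ?H4 ?H1 ?H2 ?H3 ?(sr0 H1) ?(sr1 H1) ?(sr2 H1) ?(sr0 H2) ?(sr1 H2) ?(sr2 H2)
          ?(sr0 H3) ?(sr1 H3) ?(sr2 H3) ?(sr0 H4) ?(sr1 H4) ?(sr2 H4) /gpos /fa_of ?H2 ?H3 ?H4 ?H1 /=;
  do 4 hstep.
Qed.

Fixpoint sweep (n : nat) : seq act :=
  match n with
  | 0 => stepS 0
  | n'.+1 => stepS n'.+1 ++ trans n'.+1 ++ sweep n'
  end.

Lemma sweep_ok l n : n < l -> Hoare l (TS n) (dS n) (sweep n) (TEy 0) (dE 0).
Proof.
elim: n => [|n IH] Hn; first exact: step_ok.
change (sweep n.+1) with (stepS n.+1 ++ trans n.+1 ++ sweep n).
apply: (H_cat (step_ok Hn)).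
apply: (H_cat (@trans_ok l n)).
apply: IH; lia.
Qed.

Definition gsetup m : seq act :=
  if m.+2 %% 3 == 1 then
    [:: Sl j3 (Troot 1, Pv 1, 3) (Troot 1) (Pv 1) set_fa; Pl j2 (Pv 1) (Pv 1, Vv 0, 2); Rm j3 id]
  else if m.+2 %% 3 == 2 then [::]
  else [:: Pl j1 (Troot 1) (Troot 1, Tmid 1 0, 1); Rm j3 id].
Definition setup m : seq act :=
  gsetup m ++ [:: Pl (sr m.+1) (Vv m.+2) (Vv m.+1, Vv m.+2, (m.+1 %% 3).+1);
                  Sl (sr m.+1) (Vv m.+1, Vv m.+2, (m.+1 %% 3).+1) (Vv m.+2) (Vv m.+1) dec_x].

Lemma setup_ok m : Hoare m.+1 (None, None, Some (Troot 1))
  (D 12 0 false false false false m.+2 false false) (setup m) (TS m) (dS m).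
Proof.
rewrite /setup /gsetup /TS /dS.
resid m; do 7 hstep.
Qed.

Definition fin : seq act :=
  [:: Sl j3 (Troot 1, Pv 1, 3) (Troot 1) (Pv 1) set_fa; Pl j2 (Pv 1) (Pv 1, Vv 0, 2);
      Sl j2 (Pv 1, Vv 0, 2) (Pv 1) (Vv 0) set_fb; Rm j3 id;
      Sl j2 (Vv 0, Pv 3, 2) (Vv 0) (Pv 3) set_fc; Pl j3 (Pv 3) (Pv 3, Troot 2, 3);
      Sl j3 (Pv 3, Troot 2, 3) (Pv 3) (Troot 2) set_fd; Rm j2 id; Rm j1 id].

Lemma fin_ok l : Hoare l (TEy 0) (dE 0) fin (None, None, Some (Troot 2))
  (D 12 0 true true true true 0 false false).
Proof.
rewrite /TEy /dE /fin (sr0 (erefl : 0 %% 3 = 0)) (sr2 (erefl : 2 %% 3 = 2)) /gpos /fa_of /=.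
do 10 hstep.
Qed.

Lemma phase3 l : Hoare l (None, None, Some (Troot 2)) (D 12 0 true true true true 0 false false)
  (tree 2) (None, None, Some (Troot 2)) (D 12 12 true true true true 0 false false).
Proof.
rewrite /tree /subA /leafA /=.
do 40 hstep.
Qed.

Definition acts l : seq act :=
  (Pl j3 (Troot 1) (Troot 1, Pv 1, 3) :: tree 1) ++ setup l.-1 ++ sweep l.-1 ++ fin ++ tree 2.

Lemma acts_ok m : Hoare m.+1 (None, None, None) (d0 m.+1) (acts m.+1)
  (None, None, Some (Troot 2)) (D 12 12 true true true true 0 false false).
Proof.
change (acts m.+1) with
  ((Pl j3 (Troot 1) (Troot 1, Pv 1, 3) :: tree 1) ++ setup m ++ sweep m ++ fin ++ tree 2).
apply: (H_cat (@phase1 m.+1)).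
apply: (H_cat (@setup_ok m)).
apply: (H_cat (@sweep_ok m.+1 m (ltnSn m))).
apply: (H_cat (@fin_ok m.+1)).
exact: (@phase3 m.+1).
Qed.

Lemma init_S l g : g \in T_edges l -> Sd (d0 l) g = false.
Proof.
case/TEP => [||||i a Hi _|i a b Hi _ _|y Hy|y Hy|y Hy] //=; rewrite /tsel /=.
- by case/orP: Hi => /eqP -> /=.
- by case/orP: Hi => /eqP -> /=.
- lia.
- rewrite andbF orbF; lia.
- rewrite andbF orbF; lia.
Qed.

Lemma final_S l g : g \in T_edges l -> Sd (D 12 12 true true true true 0 false false) g.
Proof.
case/TEP => [||||i a Hi Ha|i a b Hi Ha Hb|y Hy|y Hy|y Hy] //=; rewrite /tsel /=.
- by case/orP: Hi => /eqP -> /=; lia.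
- by case/orP: Hi => /eqP -> /=; lia.
- lia.
- lia.
Qed.

Theorem lemma3p6 (l : nat) :
  3 <= l ->
  search_strategy_exists (T_edges l) (fun j : 'I_3 => (nat_of_ord j).+1).
Proof.
case: l => [|m] // _.
pose s0 : state vtx 3 := State (fun _ : 'I_3 => None) (fun _ : edge vtx => False).
have I0 : Inv m.+1 (None, None, None) (d0 m.+1) s0.
  split; first by case=> [[|[|[|]]] ?].
  by move=> g gG; rewrite init_S.
have [Hv Hi] := @acts_ok m s0 I0.
exists (size (acts m.+1)), (fun i => runs m.+1 s0 (take i (acts m.+1))); split.
- by move=> j; rewrite take0.
- by move=> e; rewrite take0.
- by move=> i Hi'; exact: valid_take.
- move=> e eG; rewrite take_size; case: Hi => _; apply=> //; exact: (final_S eG).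
Qed.
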